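(* Let $1\le p\le q\le\infty$ and $r\in(0,\infty]$. There exists a constant $C\ge1$ such that $$C^{-1}\|f\|_{\hat M^p_{q,r}}\le\|D_p(h)A(s)T(y)P(\xi)f\|_{\hat M^p_{q,r}}\le C\|f\|_{\hat M^p_{q,r}}$$ for any $f\in\hat M^p_{q,r}$ and any $(h,\xi,s,y)\in2^{\mathbb Z}\times\mathbb R\times\mathbb R\times\mathbb R$. Moreover, if $\xi=0$, the inequalities hold with $C=1$.
   Context: $\mathcal D=\{[k2^{-j},(k+1)2^{-j}):j,k\in\mathbb Z\}$. For $1\le p\le q\le\infty$, $\|f\|_{\hat M^p_{q,r}}=\big\||I|^{\frac1q-\frac1p}\|\hat f\|_{L^{q'}(I)}\big\|_{\ell^r_{I\in\mathcal D}}$ (with sup if $r=\infty$), $q'$ the Hölder conjugate. $(T(y)f)(x)=f(x-y)$, $(P(\xi)f)(x)=e^{-ix\xi}f(x)$, $(D_p(h)f)(x)=h^{1/p}f(hx)$, $A(s)=e^{-s\partial_x^3}$ (Fourier multiplier $e^{is\xi^3}$). *)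

(* Defs.v *)
From mathcomp Require Import all_boot all_order all_algebra.
From mathcomp Require Import all_classical all_reals all_analysis.
From mathcomp Require Import complex.
Set Implicit Arguments. Unset Strict Implicit. Unset Printing Implicit Defensive.
Import Order.TTheory GRing.Theory Num.Theory.
Local Open Scope ring_scope.
Local Open Scope classical_set_scope.

(* Functions are represented through their Fourier transform
   \hat f(xi) = \int e^{-i x xi} f(x) dx.
   A "Fourier-side function" is  F : R -> R[i]. *)

Section Defs.
Variable R : realType.

Definition cmod (z : R[i]) : R := Num.sqrt (complex.Re z ^+ 2 + complex.Im z ^+ 2).

Definition expi (t : R) : R[i] := Complex (cos t) (sin t).

Definition einv (p : \bar R) : R :=
  match p with
  | x%:E => x^-1
  | _ => 0
  end.

(* Hoelder conjugate exponent q' of q in [1,+oo]: 1/q + 1/q' = 1 *)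
Definition hconj (q : \bar R) : \bar R :=
  match q with
  | x%:E => if x == 1 then +oo%E else (x / (x - 1))%:E
  | _ => 1%E
  end.

Definition dyadic (j k : int) : set R :=
  `[k%:~R * 2 ^ (- j), (k + 1)%:~R * 2 ^ (- j)[%classic.

Definition dlen (j : int) : R := 2 ^ (- j).

Definition locnorm (q : \bar R) (j k : int) (F : R -> R[i]) : \bar R :=
  Lnorm (@lebesgue_measure R) (hconj q)
    (fun x => ((\1_(dyadic j k) x : R) * cmod (F x))%:E).

Definition wloc (p q : \bar R) (j k : int) (F : R -> R[i]) : \bar R :=
  ((dlen j `^ (einv q - einv p))%:E * locnorm q j k F)%E.

Definition hatM_norm (p q r : \bar R) (F : R -> R[i]) : \bar R :=
  match r with
  | r'%:E => poweR (esum [set: int * int]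
                     (fun jk => poweR (wloc p q jk.1 jk.2 F) r')) r'^-1
  | _ => ereal_sup [set wloc p q jk.1 jk.2 F | jk in [set: int * int]]
  end.

Definition in_hatM (p q r : \bar R) (F : R -> R[i]) : Prop :=
  measurable_fun setT (fun x => complex.Re (F x)) /\
  measurable_fun setT (fun x => complex.Im (F x)) /\
  (hatM_norm p q r F < +oo)%E.

(* The operators, acting on F = \hat f (Fourier side):
   (T(y) f)^(xi)   = e^{-i y xi} \hat f(xi)
   (P(eta) f)^(xi) = \hat f(xi + eta)            [P(eta)f = e^{-i x eta} f]
   (A(s) f)^(xi)   = e^{i s xi^3} \hat f(xi)
   (D_p(h) f)^(xi) = h^{1/p - 1} \hat f(xi / h)  [D_p(h)f = h^{1/p} f(h .)] *)
Definition hatT (y : R) (F : R -> R[i]) : R -> R[i] :=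
  fun xi => expi (- (y * xi)) * F xi.
Definition hatP (eta : R) (F : R -> R[i]) : R -> R[i] :=
  fun xi => F (xi + eta).
Definition hatA (s : R) (F : R -> R[i]) : R -> R[i] :=
  fun xi => expi (s * xi ^+ 3) * F xi.
Definition hatD (p : \bar R) (h : R) (F : R -> R[i]) : R -> R[i] :=
  fun xi => Complex (h `^ (einv p - 1)) 0 * F (xi / h).

End Defs.

(* Main.v *)
Require Import Defs.
From mathcomp Require Import all_boot all_order all_algebra.
From mathcomp Require Import all_classical all_reals all_analysis.
From mathcomp Require Import complex.
From mathcomp Require Import measurable_realfun ess_sup_inf hoelder.
From mathcomp Require Import ring lra.
Import Order.TTheory GRing.Theory Num.Theory.
Local Open Scope ring_scope.

Module Helpers.
Import numFieldNormedType.Exports.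
Local Open Scope ring_scope.

Section affine.
Local Open Scope classical_set_scope.
Context {R : realType}.
Local Notation mu := (@lebesgue_measure R).

Lemma aff_mfun0 (a b : R) : measurable_fun setT (fun x : R => a * x + b).
Proof. by apply: measurable_realfun.measurable_funD => //; exact: measurable_realfun.measurable_funM. Qed.
Lemma aff_mfun (a b : R) : measurable_fun (T:=measurableTypeR R) (U:=measurableTypeR R) setT (fun x : R => a * x + b).
Proof. exact: aff_mfun0. Qed.

Lemma aff_measure (a b : R) : 0 < a -> forall A, measurable A ->
  mu ((fun x => a * x + b) @^-1` A) = ((a^-1)%:E * mu A)%E.
Proof.
move=> a0 A mA.
pose pf := measure_function_pushforward__canonical__measure_function_Measure mu (aff_mfun a b).
pose k := NngNum (ltW a0).
suff h : forall X, measurable X -> mu X = (a%:E * mu ((fun x : R => (a * x + b)%R) @^-1` X))%E.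
  by rewrite [in RHS]h // muleA -EFinM mulVf ?mul1e ?gt_eqF.
move=> X mX; apply: (@lebesgue_measure_unique R (mscale k pf)) => //.
move=> _ [[x1 x2] _ <-] /=.
transitivity (a%:E * mu ((fun x : R => (a * x + b)%R) @^-1` `]x1, x2]%classic))%E; last by [].
have -> : (fun x => a * x + b) @^-1` `]x1, x2] = `](x1 - b) / a, (x2 - b) / a]%classic.
  apply/seteqP; split => x /=; rewrite !in_itv /=.
    move=> /andP[h1 h2]; apply/andP; split.
      by rewrite ltr_pdivrMr // ltrBlDr mulrC.
    by rewrite ler_pdivlMr // lerBrDr mulrC.
  move=> /andP[h1 h2]; apply/andP; split.
    by rewrite -ltrBlDr mulrC -ltr_pdivrMr.
  by rewrite -lerBrDr mulrC -ler_pdivlMr.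
rewrite !lebesgue_measure_itv /= !lte_fin ltr_pM2r ?invr_gt0 // ltrD2r.
case: ifP => _; last by rewrite mule0.
by rewrite -EFinM; congr EFin; field; rewrite gt_eqF.
Qed.

Lemma aff_integral (a b : R) (g : R -> \bar R) : 0 < a ->
  measurable_fun [set: R] g -> (forall x, 0 <= g x)%E ->
  (\int[mu]_x g (a * x + b)%R)%E = ((a^-1)%:E * \int[mu]_x g x)%E.
Proof.
move=> a0 mg g0.
have := @ge0_integral_pushforward _ _ _ _ R _ (aff_mfun a b) mu setT g
  measurableT mg (fun y _ => g0 y).
rewrite preimage_setT => <-.
pose pf := measure_function_pushforward__canonical__measure_function_Measure mu (aff_mfun a b).
have ai0 : 0 < a^-1 by rewrite invr_gt0.
pose k := NngNum (ltW ai0).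
have -> : ((a^-1)%:E * \int[mu]_x g x = \int[mscale k mu]_x g x)%E.
  by rewrite ge0_integral_mscale.
change (\int[pf]_x g x = \int[mscale k mu]_x g x)%E.
apply: eq_measure_integral => A mA _.
change (mu ((fun x : R => a * x + b) @^-1` A) = ((a^-1)%:E * mu A)%E).
exact: aff_measure.
Qed.

Lemma ae_aff (a b : R) (P : R -> Prop) : 0 < a ->
  (\forall x \ae mu, P x) -> \forall x \ae mu, P (a * x + b).
Proof.
move=> a0 [A [mA A0 NA]]; exists ((fun x => a * x + b) @^-1` A); split.
- by rewrite -[X in measurable X]setTI; apply: aff_mfun.
- by rewrite aff_measure // A0 mule0.
- by move=> x /= nP; apply: NA.
Qed.

Lemma aff_ess_sup (a b : R) (f : R -> \bar R) : 0 < a ->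
  ess_sup_inf.ess_sup mu (fun x => f (a * x + b)) = ess_sup_inf.ess_sup mu f.
Proof.
move=> a0; apply/eqP; rewrite eq_le; apply/andP; split.
  apply/ess_sup_inf.ess_supP.
  have h := ae_aff a b (fun x => f x <= ess_sup_inf.ess_sup mu f)%E a0 (ess_sup_inf.ess_sup_ge mu f).
  apply: filterS h; try exact: (@ae_filter_ringOfSetsType _ (measurableTypeR R) R mu).
  by move=> x.
apply/ess_sup_inf.ess_supP.
have ai0 : 0 < a^-1 by rewrite invr_gt0.
have h := ae_aff a^-1 (- b / a) (fun x => f (a * x + b)%R <= ess_sup_inf.ess_sup mu (fun x => f (a * x + b)%R))%E
  ai0 (ess_sup_inf.ess_sup_ge mu _).
apply: filterS h; try exact: (@ae_filter_ringOfSetsType _ (measurableTypeR R) R mu).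
move=> x /=.
have -> : (a * (a^-1 * x + - b / a) + b = x)%R by field; rewrite gt_eqF.
done.
Qed.

End affine.


Section lnorm.
Local Open Scope classical_set_scope.
Context {R : realType}.
Local Notation mu := (@lebesgue_measure R).

Lemma muT_gt0 : (0 < mu [set: R])%E.
Proof.
have -> : [set: R] = `]-oo, +oo[%classic by rewrite set_itvE.
by rewrite lebesgue_measure_itv /= addye.
Qed.

Lemma mpow (g : R -> R) (r : R) : measurable_fun [set: R] g ->
  measurable_fun [set: R] (fun x => (`|g x| `^ r)%:E).
Proof.
move=> mg; apply/measurable_EFinP.
apply: (measurableT_comp (measurable_powR r)).
exact: measurableT_comp.
Qed.

Lemma mpowL (g : R -> R) (r : R) : measurable_fun [set: R] g ->
  measurable_fun (T:=measurableTypeR R) [set: R] (fun x => (`|g x| `^ r)%:E).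
Proof. exact: mpow. Qed.

Lemma N_homog (Q : \bar R) (c : R) (g : R -> R) : (1 <= Q)%E -> 0 <= c ->
  measurable_fun [set: R] g ->
  Lnorm mu Q (fun x => (c * g x)%:E) = (c%:E * Lnorm mu Q (fun x => (g x)%:E))%E.
Proof.
move=> Q1 c0 mg; rewrite unlock; case: Q Q1 => [r| |] Q1; last by move: Q1; rewrite leeNy_eq.
- have r0 : 0 < r by rewrite -lte_fin (lt_le_trans _ Q1).
  under eq_integral do rewrite abse_EFin normrM poweR_EFin powRM // EFinM.
  under [in RHS]eq_integral do rewrite abse_EFin poweR_EFin.
  rewrite ge0_integralZl_EFin //; last first.
    apply/measurable_EFinP; apply: (measurableT_comp (measurable_powR r)).
    exact: measurableT_comp.
  rewrite poweRM ?lee_fin ?powR_ge0 //; last by apply: integral_ge0 => x _; rewrite lee_fin powR_ge0.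
  by rewrite poweR_EFin -powRrM mulfV ?gt_eqF // powRr1 // ger0_norm.
- rewrite !ifT; [ | exact: muT_gt0 | exact: muT_gt0].
  rewrite -ess_supZl //; last exact: muT_gt0.
  congr ess_sup; apply/funext => x /=.
  by rewrite normrM ger0_norm // EFinM.
Qed.

Lemma N_mono (Q : \bar R) (f h : R -> R) : (1 <= Q)%E -> (forall x, 0 <= f x <= h x) ->
  measurable_fun [set: R] f -> measurable_fun [set: R] h ->
  (Lnorm mu Q (fun x => (f x)%:E) <= Lnorm mu Q (fun x => (h x)%:E))%E.
Proof.
move=> Q1 fh mf mh; rewrite unlock; case: Q Q1 => [r| |] Q1; last by move: Q1; rewrite leeNy_eq.
- have r0 : 0 < r by rewrite -lte_fin (lt_le_trans _ Q1).
  under eq_integral do rewrite abse_EFin poweR_EFin.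
  under [in X in (_ <= X)%E]eq_integral do rewrite abse_EFin poweR_EFin.
  apply: gt0_ler_poweR.
  + by rewrite invr_ge0 ltW.
  + by rewrite in_itv /= leey andbT; apply: integral_ge0 => x _; rewrite lee_fin powR_ge0.
  + by rewrite in_itv /= leey andbT; apply: integral_ge0 => x _; rewrite lee_fin powR_ge0.
  apply: ge0_le_integral => //. all: try (by move=> x _; rewrite lee_fin powR_ge0).
  + apply/measurable_EFinP; apply: (measurableT_comp (measurable_powR r)).
    exact: measurableT_comp.
  + apply/measurable_EFinP; apply: (measurableT_comp (measurable_powR r)).
    exact: measurableT_comp.
  move=> x _; have /andP[f0 fh'] := fh x; have h0 : 0 <= h x := le_trans f0 fh'.
  by rewrite lee_fin ge0_ler_powR ?nnegrE ?normr_ge0 ?(ltW r0) // !ger0_norm.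
- rewrite !ifT; [ | exact: muT_gt0 | exact: muT_gt0].
  apply: le_ess_sup; apply: nearW => x /=.
  have /andP[f0 fh'] := fh x; have h0 : 0 <= h x := le_trans f0 fh'.
  by rewrite lee_fin !ger0_norm.
Qed.

Lemma N_sub (Q : \bar R) (f g1 g2 : R -> R) : (1 <= Q)%E ->
  (forall x, 0 <= f x <= g1 x + g2 x) ->
  measurable_fun [set: R] f -> measurable_fun [set: R] g1 -> measurable_fun [set: R] g2 ->
  (Lnorm mu Q (fun x => (f x)%:E) <=
   Lnorm mu Q (fun x => (g1 x)%:E) + Lnorm mu Q (fun x => (g2 x)%:E))%E.
Proof.
move=> Q1 fg mf m1 m2.
apply: le_trans (eminkowski mu m1 m2 Q1).
apply: (@N_mono Q f (g1 \+ g2)) => //.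
exact: measurable_funD.
Qed.

Lemma powRVinv (a s : R) : 0 < a -> (a^-1) `^ s = a `^ (- s).
Proof.
move=> a0; rewrite powRN.
have ps : 0 < a `^ s by apply: powR_gt0.
have h : a^-1 `^ s * a `^ s = 1.
  by rewrite -powRM ?invr_ge0 ?ltW // mulVf ?gt_eqF // powR1.
have psn : a `^ s != 0 by rewrite gt_eqF.
by rewrite -[LHS]mulr1 -(mulfV psn) mulrA h mul1r.
Qed.

Lemma N_aff (Q : \bar R) (a b : R) (g : R -> R) : (1 <= Q)%E -> 0 < a ->
  measurable_fun [set: R] g ->
  Lnorm mu Q (fun x => (g (a * x + b))%:E) =
  ((a `^ (- einv Q))%:E * Lnorm mu Q (fun x => (g x)%:E))%E.
Proof.
move=> Q1 a0 mg; rewrite unlock; case: Q Q1 => [r| |] Q1; last by move: Q1; rewrite leeNy_eq.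
- have r0 : 0 < r by rewrite -lte_fin (lt_le_trans _ Q1).
  under eq_integral do rewrite abse_EFin poweR_EFin.
  under [in RHS]eq_integral do rewrite abse_EFin poweR_EFin.
  rewrite (aff_integral a b (fun y => (`|g y| `^ r)%:E) a0) //; last first.
    apply/measurable_EFinP; apply: (measurableT_comp (measurable_powR r)).
    exact: measurableT_comp.
  rewrite poweRM ?lee_fin ?invr_ge0 ?(ltW a0) //; last first.
    by apply: integral_ge0 => x _; rewrite lee_fin powR_ge0.
  by rewrite poweR_EFin powRVinv.
- rewrite !ifT; [ | exact: muT_gt0 | exact: muT_gt0].
  rewrite /= oppr0 powRr0 mul1e.
  exact: (aff_ess_sup a b (abse \o (fun x => (g x)%:E)) a0).
Qed.
End lnorm.


Section cm.
Context {R : realType}.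

Lemma cmod_ge0 (z : R[i]) : 0 <= cmod z.
Proof. exact: sqrtr_ge0. Qed.

Lemma cmodM (z w : R[i]) : cmod (z * w) = cmod z * cmod w.
Proof.
case: z => a b; case: w => c d.
rewrite /cmod -sqrtrM ?addr_ge0 ?sqr_ge0 //.
by congr Num.sqrt; rewrite /=; ring.
Qed.

Lemma cmod_expi (t : R) : cmod (expi t) = 1.
Proof. by rewrite /cmod /expi /= (cos2Dsin2 t) sqrtr1. Qed.

Lemma cmod_real (c : R) : 0 <= c -> cmod (Complex c 0) = c.
Proof. by move=> c0; rewrite /cmod /= expr0n /= addr0 sqrtr_sqr ger0_norm. Qed.

Lemma mcmod (F : R -> R[i]) :
  measurable_fun setT (fun x => complex.Re (F x)) ->
  measurable_fun setT (fun x => complex.Im (F x)) ->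
  measurable_fun [set: R] (fun x => cmod (F x)).
Proof.
move=> mre mim; rewrite /cmod.
apply: (measurableT_comp (continuous_measurable_fun (@sqrt_continuous R))).
by apply: measurable_funD; apply: measurable_funX.
Qed.

Lemma hconj_ge1 (q : \bar R) : (1 <= q)%E -> (1 <= hconj q)%E.
Proof.
case: q => [x| |] //= q1.
case: ifP => [_|/negbT x1]; first by rewrite leey.
have x1' : 1 < x by rewrite lt_neqAle eq_sym x1 -lee_fin.
rewrite lee_fin ler_pdivlMr ?subr_gt0 // mul1r.
by rewrite lerBlDr lerDl.
Qed.

Lemma einv_hconj (q : \bar R) : (1 <= q)%E -> einv (hconj q) = 1 - einv q.
Proof.
case: q => [x| |] q1 /=.
- case: ifP => [/eqP ->|/negbT x1] /=; first by rewrite invr1 subrr.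
  have x0 : x != 0 by rewrite gt_eqF // (lt_le_trans ltr01) // -lee_fin.
  have x10 : x - 1 != 0 by rewrite subr_eq0.
  by rewrite invf_div; field.
- by rewrite invr1 subr0.
- by rewrite invr1 subr0.
Qed.

End cm.


Section dy.
Local Open Scope classical_set_scope.
Context {R : realType}.
Local Notation mu := (@lebesgue_measure R).

Definition sh (j k : int) (x : R) : set R :=
  `[k%:~R * 2 ^ (- j) + x, (k + 1)%:~R * 2 ^ (- j) + x[%classic.

Lemma dyadic_sh (j k : int) : dyadic j k = sh j k 0.
Proof. by rewrite /sh /dyadic !addr0. Qed.

Lemma in_sh j k x u : (u \in sh j k x) =
  (k%:~R * 2 ^ (- j) + x <= u) && (u < (k + 1)%:~R * 2 ^ (- j) + x).
Proof. by rewrite /sh; first [rewrite in_itv | rewrite inE /= in_itv | rewrite mem_setE in_itv | rewrite set_itvE]. Qed.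

Lemma msh j k x : measurable (sh j k x).
Proof. exact: measurable_itv. Qed.

Definition W (p q : \bar R) (phi : R -> R) (x : R) (j k : int) : \bar R :=
  ((@dlen R j `^ (einv q - einv p))%:E *
   Lnorm mu (hconj q) (fun u => ((\1_(sh j k x) u : R) * phi u)%:E))%E.

Lemma W_ge0 p q phi x j k : (0 <= W p q phi x j k)%E.
Proof. by rewrite mule_ge0 ?lee_fin ?powR_ge0 ?Lnorm_ge0. Qed.

Lemma mind j k x (phi : R -> R) : measurable_fun [set: R] phi ->
  measurable_fun [set: R] (fun u => (\1_(sh j k x) u : R) * phi u).
Proof. by move=> mphi; apply: measurable_funM => //; exact: measurable_indic (msh _ _ _). Qed.

Lemma W_shift p q phi x y j k : (1 <= q)%E -> measurable_fun [set: R] phi ->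
  W p q (fun u => phi (u + x)) y j k = W p q phi (y + x) j k.
Proof.
move=> q1 mphi; rewrite /W; congr (_ * _)%E.
set g := fun u => (\1_(sh j k (y + x)) u : R) * phi u.
transitivity (Lnorm mu (hconj q) (fun u => (g (1 * u + x))%:E)).
  congr Lnorm; apply/funext => u; rewrite /g mul1r; congr ((_ * _)%:E).
  by rewrite !indicE !in_sh !addrA lerD2r ltrD2r.
by rewrite N_aff ?hconj_ge1 //; [rewrite powR1 mul1e | exact: mind].
Qed.


Lemma weight (j m : int) (ep eq : R) :
  (2 ^ (- j)) `^ (eq - ep) * ((2 ^ m) `^ (ep - 1) * ((2 ^ m)^-1) `^ (- (1 - eq)))
  = (2 ^ (- (j + m))) `^ (eq - ep).
Proof.
have p2 : (0:R) <= 2 by [].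
rewrite invr_expz -!(powR_intmul _ p2) -!powRrM.
rewrite -!powRD ?pnatr_eq0 ?implybT //.
congr (_ `^ _); rewrite !intrN !intrD; ring.
Qed.


Lemma W_G p q (F : R -> R[i]) (m : int) (xi s y : R) (j k : int) :
  (1 <= q)%E -> measurable_fun [set: R] (fun u => cmod (F u)) ->
  wloc p q j k (hatD p (2 ^ m) (hatA s (hatT y (hatP xi F)))) =
  W p q (fun u => cmod (F u)) xi (j + m) k.
Proof.
move=> q1 mF.
set h : R := 2 ^ m.
have h0 : 0 < h by exact: exprz_gt0.
set c := h `^ (einv p - 1).
set g := fun u => (\1_(sh (j + m) k xi) u : R) * cmod (F u).
rewrite /wloc /locnorm /W.
have -> : (fun u => ((\1_(dyadic j k) u : R) * cmod (hatD p h (hatA s (hatT y (hatP xi F))) u))%:E)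
        = (fun u => (c * g (h^-1 * u + xi))%:E).
  apply/funext => u; congr EFin.
  rewrite /hatD /hatA /hatT /hatP !cmodM cmod_real ?powR_ge0 // !cmod_expi !mul1r.
  rewrite /g mulrCA; congr (c * _); congr (_ * cmod (F _)); last by rewrite mulrC.
  rewrite dyadic_sh !indicE !in_sh !addr0 lerD2r ltrD2r.
  have e : forall z : int, z%:~R * 2 ^ (- (j + m)) = h^-1 * (z%:~R * (2:R) ^ (- j)).
    move=> z; rewrite /h invr_expz opprD expfzDr ?pnatr_eq0 //.
    by rewrite mulrA mulrC.
  by rewrite !e ler_pM2l ?invr_gt0 // ltr_pM2l ?invr_gt0.
have ai0 : 0 < h^-1 by rewrite invr_gt0.
rewrite N_homog ?hconj_ge1 ?powR_ge0 //; last first.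
  change (measurable_fun [set: R] (g \o (fun u => h^-1 * u + xi))).
  by apply: measurableT_comp; [exact: mind | exact: aff_mfun0].
rewrite N_aff ?hconj_ge1 //; last exact: mind.
rewrite einv_hconj // !muleA -!EFinM; congr (_ * _)%E; congr EFin.
by rewrite -mulrA /dlen weight.
Qed.


Lemma W_cover (p q : \bar R) (phi : R -> R) (x : R) (j k : int) : (1 <= q)%E -> measurable_fun [set: R] phi ->
  (forall u, 0 <= phi u) ->
  (W p q phi x j k <= W p q phi 0 j (k + Num.floor (x / 2 ^ (- j)))
                      + W p q phi 0 j (k + Num.floor (x / 2 ^ (- j)) + 1))%E.
Proof.
move=> q1 mphi phi0; set n := Num.floor (x / 2 ^ (- j)).
rewrite /W -ge0_muleDr ?Lnorm_ge0 //.
apply: lee_wpmul2l; first by rewrite lee_fin powR_ge0.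
apply: N_sub; [exact: hconj_ge1 | | exact: mind | exact: mind | exact: mind].
move=> u; set t : R := 2 ^ (- j).
have t0 : 0 < t by exact: exprz_gt0.
have i0 : forall A, (0:R) <= \1_A u by move=> A; rewrite indicE ler0n.
apply/andP; split; first by rewrite mulr_ge0.
rewrite !indicE; case: (boolP (u \in sh j k x)) => H; last first.
  by rewrite mul0r addr_ge0 // mulr_ge0 // ler0n.
rewrite mul1r.
have n1 : n%:~R * t <= x by rewrite -ler_pdivlMr // floor_le.
have n2 : x < (n + 1)%:~R * t by rewrite -ltr_pdivrMr // floorD1_gt.
rewrite in_sh !intrD /= !mulrDl !mul1r -/t in H; case/andP: H => h1 h2.
rewrite intrD /= mulrDl mul1r in n2.
have [ul|ug] := ltP u (k%:~R * t + n%:~R * t + t).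
  have -> : (u \in sh j (k + n) 0) by rewrite in_sh !addr0 !intrD /= !mulrDl !mul1r -/t; apply/andP; split; lra.
  by rewrite mul1r lerDl mulr_ge0 // ler0n.
have -> : (u \in sh j (k + n + 1) 0) by rewrite in_sh !addr0 !intrD /= !mulrDl !mul1r -/t; apply/andP; split; lra.
by rewrite mul1r lerDr mulr_ge0 // ler0n.
Qed.

End dy.


Section mr.
Local Open Scope classical_set_scope.
Context {R : realType}.
Local Open Scope ereal_scope.

Definition Mr (r : \bar R) (V : int * int -> \bar R) : \bar R :=
  match r with
  | r'%:E => poweR (esum [set: int * int] (fun jk => poweR (V jk) r')) r'^-1
  | _ => ereal_sup [set V jk | jk in [set: int * int]]
  end.

Lemma Mr_ext r V V' : (forall jk, V jk = V' jk) -> Mr r V = Mr r V'.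
Proof. by move=> h; have -> : V = V' by apply/funext. Qed.

Lemma Mr_reindex r V (s s' : int * int -> int * int) :
  cancel s s' -> cancel s' s -> Mr r (fun jk => V (s jk)) = Mr r V.
Proof.
move=> c1 c2; case: r => [r'| |] /=.
- congr poweR.
  rewrite (@reindex_esum R _ _ setT setT s (fun jk => V jk `^ r')) //.
  by rewrite setTT_bijective; exact: (Bijective c1 c2).
- congr ereal_sup; apply/seteqP; split => y [jk _ <-].
    by exists (s jk).
  by exists (s' jk) => //; rewrite c2.
- congr ereal_sup; apply/seteqP; split => y [jk _ <-].
    by exists (s jk).
  by exists (s' jk) => //; rewrite c2.
Qed.

Lemma esumZ (c : R) (a : int * int -> \bar R) : (0 < c)%R -> (forall i, 0 <= a i) ->
  esum [set: int * int] (fun i => c%:E * a i) = c%:E * esum [set: int * int] a.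
Proof.
move=> c0 a0; rewrite /esum -ereal_sup_pZl //; congr ereal_sup.
apply/seteqP; split => y.
  move=> [X SX <-]; exists (\sum_(x \in X) a x); first by exists X.
  by rewrite ge0_mule_fsumr.
move=> [x [X SX <-] <-]; exists X => //.
by rewrite ge0_mule_fsumr.
Qed.

Lemma twice (B : \bar R) : 0 <= B -> B + B = 2%:E * B.
Proof.
case: B => [b| |] //= _.
- by rewrite -EFinD -EFinM mulr2n mulrDl mul1r.
- by rewrite gt0_muley.
Qed.

Lemma pow_sum_le (r : R) (V A B : \bar R) : (0 < r)%R -> 0 <= V -> 0 <= A -> 0 <= B ->
  V <= A + B -> V `^ r <= (2 `^ r)%:E * (A `^ r + B `^ r).
Proof.
move=> r0 V0 A0 B0 VAB.
have inI : forall x : \bar R, 0 <= x -> x \in `[0%E, +oo%E]%R.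
  by move=> x x0; rewrite in_itv /= x0 leey.
wlog AB : A B A0 B0 VAB / A <= B.
  move=> H; have [AB|BA] := leP A B; first exact: H.
  rewrite addeC; apply: H => //; first by rewrite addeC.
  exact: ltW.
apply: (@le_trans _ _ ((B + B) `^ r)).
  apply: gt0_ler_poweR; [exact: ltW | exact: inI | by apply: inI; rewrite adde_ge0 | ].
  by apply: (le_trans VAB); apply: leeD.
rewrite twice // poweRM // poweR_EFin.
apply: lee_wpmul2l; first by rewrite lee_fin powR_ge0.
by rewrite leeDr // poweR_ge0.
Qed.


Definition Kc (r : \bar R) : R :=
  match r with r'%:E => 2 * 2 `^ r'^-1 | _ => 2 end.

Lemma Kc_ge1 r : 0 < r -> (1 <= Kc r)%R.
Proof.
case: r => [r'| |] //= r0; last lra.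
have r'0 : (0 < r')%R by rewrite -lte_fin.
have : ((2:R) `^ 0 <= 2 `^ r'^-1)%R.
  by apply: ler_powR; [rewrite ler1n | rewrite invr_ge0 ltW].
rewrite powRr0 => ?; lra.
Qed.

Lemma Mr_le r V V0 (s1 s1' s2 s2' : int * int -> int * int) : 0 < r ->
  cancel s1 s1' -> cancel s1' s1 -> cancel s2 s2' -> cancel s2' s2 ->
  (forall i, 0 <= V i) -> (forall i, 0 <= V0 i) ->
  (forall i, V i <= V0 (s1 i) + V0 (s2 i)) ->
  Mr r V <= (Kc r)%:E * Mr r V0.
Proof.
move=> r0 c1 c1' c2 c2' HV0 HV00 HV.
have inI : forall x : \bar R, 0 <= x -> x \in `[0%E, +oo%E]%R.
  by move=> x x0; rewrite in_itv /= x0 leey.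
case: r r0 => [r'| |] //= r0.
- have r'0 : (0 < r')%R by rewrite -lte_fin.
  set S := esum setT (fun jk => V0 jk `^ r').
  have S0 : 0 <= S by apply: esum_ge0 => i _; exact: poweR_ge0.
  have b1 : set_bij setT setT s1 by rewrite setTT_bijective; exact: (Bijective c1 c1').
  have b2 : set_bij setT setT s2 by rewrite setTT_bijective; exact: (Bijective c2 c2').
  have h1 : esum setT (fun jk => V jk `^ r') <= (2 `^ r')%:E * (S + S).
    apply: (@le_trans _ _ (esum setT (fun jk => (2 `^ r')%:E * (V0 (s1 jk) `^ r' + V0 (s2 jk) `^ r')))).
      by apply: le_esum => i _; apply: pow_sum_le.
    rewrite esumZ; last 2 first.
    + exact: powR_gt0.
    + by move=> i; rewrite adde_ge0 // poweR_ge0.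
    rewrite esumD; last 2 first.
    + by move=> i _; exact: poweR_ge0.
    + by move=> i _; exact: poweR_ge0.
    have e1 : esum setT (fun jk => V0 (s1 jk) `^ r') = S.
      by rewrite /S (@reindex_esum R _ _ setT setT s1 (fun jk => V0 jk `^ r')).
    have e2 : esum setT (fun jk => V0 (s2 jk) `^ r') = S.
      by rewrite /S (@reindex_esum R _ _ setT setT s2 (fun jk => V0 jk `^ r')).
    by rewrite e1 e2.
  have ri0 : (0 < r'^-1)%R by rewrite invr_gt0.
  have i1 : 0 <= esum setT (fun jk => V jk `^ r') by apply: esum_ge0 => i _; exact: poweR_ge0.
  have i2 : 0 <= (2 `^ r')%:E * (S + S) by rewrite mule_ge0 ?lee_fin ?powR_ge0 ?adde_ge0.
  have h2 := @gt0_ler_poweR R r'^-1 (ltW ri0) _ _ (inI _ i1) (inI _ i2) h1.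
  apply: (le_trans h2).
  rewrite poweRM ?lee_fin ?powR_ge0 ?adde_ge0 // poweR_EFin -powRrM mulfV ?gt_eqF //.
  rewrite powRr1 // twice // poweRM ?lee_fin // poweR_EFin.
  by rewrite muleA -EFinM.
- apply: ge_ereal_sup => _ [jk _ <-].
  set S := ereal_sup _.
  have ub : forall i, V0 i <= S by move=> i; apply: ereal_sup_ubound; exists i.
  have S0 : 0 <= S := le_trans (HV00 (0%R, 0%R)%R) (ub _).
  apply: (le_trans (HV jk)); rewrite -twice //.
  by apply: leeD.
Qed.

End mr.

End Helpers.
Import Helpers.

Theorem lemma2p3 (R : realType) (p q r : \bar R)
  (hp1 : (1 <= p)%E) (hpq : (p <= q)%E) (hr : (0 < r)%E) :
  (exists C : R, 1 <= C /\
    forall (F : R -> R[i]), in_hatM p q r F ->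
    forall (k : int) (xi s y : R),
      let G := hatD p (2 ^ k) (hatA s (hatT y (hatP xi F))) in
      (C^-1%:E * hatM_norm p q r F <= hatM_norm p q r G)%E /\
      (hatM_norm p q r G <= C%:E * hatM_norm p q r F)%E) /\
  (forall (F : R -> R[i]), in_hatM p q r F ->
    forall (k : int) (s y : R),
      let G := hatD p (2 ^ k) (hatA s (hatT y (hatP 0 F))) in
      (1^-1%:E * hatM_norm p q r F <= hatM_norm p q r G)%E /\
      (hatM_norm p q r G <= 1%:E * hatM_norm p q r F)%E).
Proof.
have q1 : (1 <= q)%E := le_trans hp1 hpq.
pose K := Kc r.
have K1 : 1 <= K := Kc_ge1 r hr.
have K0 : 0 < K := lt_le_trans ltr01 K1.
have normF : forall F, hatM_norm p q r F =
    Mr r (fun jk => W p q (fun u => cmod (F u)) 0 jk.1 jk.2).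
  move=> F; change (Mr r (fun jk => wloc p q jk.1 jk.2 F) = 
    Mr r (fun jk => W p q (fun u => cmod (F u)) 0 jk.1 jk.2)).
  by apply: Mr_ext => jk; rewrite /W /wloc /locnorm dyadic_sh.
have normG : forall (F : R -> R[i]), measurable_fun [set: R] (fun u => cmod (F u)) ->
    forall (m : int) (xi s y : R),
    hatM_norm p q r (hatD p (2 ^ m) (hatA s (hatT y (hatP xi F)))) =
    Mr r (fun jk => W p q (fun u => cmod (F u)) xi jk.1 jk.2).
  move=> F mF m xi s y.
  change (Mr r (fun jk => wloc p q jk.1 jk.2 (hatD p (2 ^ m) (hatA s (hatT y (hatP xi F))))) =
    Mr r (fun jk => W p q (fun u => cmod (F u)) xi jk.1 jk.2)).
  transitivity (Mr r (fun jk => W p q (fun u => cmod (F u)) xi (jk.1 + m) jk.2)).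
    by apply: Mr_ext => jk; exact: W_G.
  apply: (@Mr_reindex R r (fun jk => W p q (fun u => cmod (F u)) xi jk.1 jk.2)
    (fun jk => (jk.1 + m, jk.2)) (fun jk => (jk.1 - m, jk.2))).
    by case=> a b /=; rewrite addrK.
  by case=> a b /=; rewrite subrK.
have up : forall phi : R -> R, measurable_fun [set: R] phi -> (forall u, 0 <= phi u) ->
    forall x, (Mr r (fun jk => W p q phi x jk.1 jk.2) <=
      K%:E * Mr r (fun jk => W p q phi 0 jk.1 jk.2))%E.
  move=> phi mphi phi0 x.
  pose n (j : int) := Num.floor (x / 2 ^ (- j)).
  apply: (@Mr_le R r _ _ (fun jk => (jk.1, jk.2 + n jk.1)) (fun jk => (jk.1, jk.2 - n jk.1))
    (fun jk => (jk.1, jk.2 + n jk.1 + 1)) (fun jk => (jk.1, jk.2 - n jk.1 - 1))) => //.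
  - by case=> a b /=; rewrite addrK.
  - by case=> a b /=; rewrite subrK.
  - by case=> a b /=; congr (_, _); ring.
  - by case=> a b /=; congr (_, _); ring.
  - by move=> i; exact: W_ge0.
  - by move=> i; exact: W_ge0.
  - by case=> j k /=; exact: W_cover.
have down : forall phi : R -> R, measurable_fun [set: R] phi -> (forall u, 0 <= phi u) ->
    forall x, (Mr r (fun jk => W p q phi 0 jk.1 jk.2) <=
      K%:E * Mr r (fun jk => W p q phi x jk.1 jk.2))%E.
  move=> phi mphi phi0 x.
  pose psi := fun u => phi (u + x).
  have mpsi : measurable_fun [set: R] psi.
    change (measurable_fun [set: R] (phi \o (fun u => u + x))).
    by apply: measurableT_comp => //; exact: measurable_funD.
  have e1 : Mr r (fun jk => W p q phi 0 jk.1 jk.2) = Mr r (fun jk => W p q psi (- x) jk.1 jk.2).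
    by apply: Mr_ext => jk; rewrite W_shift // addNr.
  have e2 : Mr r (fun jk => W p q phi x jk.1 jk.2) = Mr r (fun jk => W p q psi 0 jk.1 jk.2).
    by apply: Mr_ext => jk; rewrite W_shift // add0r.
  by rewrite e1 e2; apply: up => // u; exact: phi0.
split.
- exists K; split => //.
  move=> F [mre [mim _]] k xi s y G.
  have mphi := mcmod F mre mim.
  have phi0 : forall u, 0 <= cmod (F u) by move=> u; exact: cmod_ge0.
  rewrite /G normG // normF; split.
  + by rewrite lee_pdivrMl //; exact: down.
  + exact: up.
- move=> F [mre [mim _]] k s y G.
  rewrite /G normG ?normF; last exact: (mcmod F mre mim).
  by rewrite invr1 !mul1e.
Qed.
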